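(* Let $n\in\mathbb{N}$, let $\eta_1,\dots,\eta_{n+1}\in\mathbb{R}^d$ with $\eta_{n+1}=0$ and $\lvert(\nabla_+\eta)_k\rvert=1$ for $1\le k\le n$, and let $w_1,\dots,w_n\ge0$. Let $\alpha_i=\langle(\nabla_+\eta)_{i+1},(\nabla_+\eta)_i\rangle$ for $1\le i\le n-1$. Consider the linear system for $\sigma_1,\dots,\sigma_n$ (with $\sigma_0=0$): $\alpha_k\sigma_{k+1}-2\sigma_k+\alpha_{k-1}\sigma_{k-1}=-\tfrac{1}{n^2}w_k$ for $1\le k\le n-1$ (the term $\alpha_{k-1}\sigma_{k-1}$ being absent for $k=1$), and $\alpha_{n-1}\sigma_{n-1}-\sigma_n=-\tfrac1{n^2}w_n$. Its solution is $\sigma_k=\frac1n\sum_{j=1}^nG_{kj}w_j$, where $G_{kj}=\frac1n\sum_{i=1}^{\min\{j,k\}}\frac{p_{ij}p_{ik}}{\beta_i}$, $p_{ij}=\prod_{m=i}^{j-1}\frac{\alpha_m}{\beta_{m+1}}$ (empty product $=1$), and $\beta_n=1$, $\beta_i=2-\alpha_i^2/\beta_{i+1}$ for $1\le i\le n-1$. Moreover, $\sigma_k>0$ for all $1\le k\le n$ for every choice of $w_1,\dots,w_n\ge0$ not all zero if and only if $\alpha_i>0$ for every $1\le i\le n-1$.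
   Context: For a finite sequence $f$, $(\nabla_+f)_k=n(f_{k+1}-f_k)$. In the chain model one takes $w_j=\lvert(\nabla_+\dot\eta)_j\rvert^2$ (with $\dot\eta_{n+1}=0$), and the system above is the tension (constraint) equation of the chain. *)

(* Defs.v *)
From HB Require Import structures.
From mathcomp Require Import all_boot all_order all_algebra.
Set Implicit Arguments. Unset Strict Implicit. Unset Printing Implicit Defensive.
Import Order.TTheory GRing.Theory Num.Theory.
Local Open Scope ring_scope.

Definition dot (R : realFieldType) (d : nat) (u v : 'rV[R]_d) : R :=
  \sum_(i < d) u 0 i * v 0 i.

(* (nabla_+ eta)_k = n (eta_{k+1} - eta_k); sequences are 1-indexed nat -> _ *)
Definition gradp (R : realFieldType) (d n : nat) (eta : nat -> 'rV[R]_d) (k : nat)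
  : 'rV[R]_d := n%:R *: (eta k.+1 - eta k).

Definition alpha (R : realFieldType) (d n : nat) (eta : nat -> 'rV[R]_d) (i : nat) : R :=
  dot (gradp n eta i.+1) (gradp n eta i).

(* betaRev a n j = beta_{n-j}: beta_n = 1, beta_i = 2 - alpha_i^2 / beta_{i+1} *)
Fixpoint betaRev (R : realFieldType) (a : nat -> R) (n j : nat) : R :=
  match j with
  | 0 => 1
  | j'.+1 => 2 - (a (n - j'.+1)%N) ^+ 2 / betaRev a n j'
  end.

Definition beta (R : realFieldType) (a : nat -> R) (n i : nat) : R :=
  betaRev a n (n - i)%N.

Definition pcoef (R : realFieldType) (a : nat -> R) (n i j : nat) : R :=
  \prod_(i <= m < j) (a m / beta a n m.+1).

Definition Gker (R : realFieldType) (a : nat -> R) (n k j : nat) : R :=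
  n%:R^-1 * \sum_(1 <= i < (minn j k).+1) (pcoef a n i j * pcoef a n i k / beta a n i).

Definition sigmaF (R : realFieldType) (a : nat -> R) (n : nat) (w : nat -> R) (k : nat) : R :=
  n%:R^-1 * \sum_(1 <= j < n.+1) (Gker a n k j * w j).

Definition tension_system (R : realFieldType) (a : nat -> R) (n : nat)
  (w sigma : nat -> R) : Prop :=
  let s := fun k => if k == 0%N then 0 else sigma k in
  (forall k, (1 <= k)%N -> (k <= n.-1)%N ->
     a k * s k.+1 - 2 * s k + a k.-1 * s k.-1 = - (w k / (n%:R ^+ 2))) /\
  ((0 < n)%N -> a n.-1 * s n.-1 - s n = - (w n / (n%:R ^+ 2))).

(* Main.v *)
Require Import Defs.
From HB Require Import structures.
From mathcomp Require Import all_boot all_order all_algebra.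
From mathcomp Require Import ring lra zify.
Set Implicit Arguments. Unset Strict Implicit. Unset Printing Implicit Defensive.
Import Order.TTheory GRing.Theory Num.Theory.
Local Open Scope ring_scope.

Lemma beta_n (R : realFieldType) (a : nat -> R) n : beta a n n = 1.
Proof. by rewrite /beta subnn. Qed.

Lemma beta_rec (R : realFieldType) (a : nat -> R) n k : (k < n)%N ->
  beta a n k = 2 - a k ^+ 2 / beta a n k.+1.
Proof.
move=> hk; rewrite /beta.
have -> : (n - k = (n - k.+1).+1)%N by lia.
rewrite /=.
by have -> : (n - (n - k.+1).+1 = k)%N by lia.
Qed.

Lemma beta_ge1 (R : realFieldType) (a : nat -> R) n :
  (forall k, (1 <= k < n)%N -> a k ^+ 2 <= 1) ->
  forall k, (1 <= k <= n)%N -> 1 <= beta a n k.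
Proof.
move=> ha.
suff H : forall j, (j < n)%N -> 1 <= betaRev a n j.
  by move=> k hk; rewrite /beta; apply: H; lia.
elim=> [|j IH] hj /=; first by rewrite lexx.
have hb := IH (ltnW hj).
have hx := ha (n - j.+1)%N ltac:(lia).
have hb0 : 0 < betaRev a n j by apply: lt_le_trans hb; rewrite ltr01.
have : a (n - j.+1)%N ^+ 2 / betaRev a n j <= 1.
  by rewrite ler_pdivrMr // mul1r; apply: le_trans hb.
lra.
Qed.

Lemma pcoef_id (R : realFieldType) (a : nat -> R) n i : pcoef a n i i = 1.
Proof. by rewrite /pcoef big_geq. Qed.

Lemma pcoef_recr (R : realFieldType) (a : nat -> R) n i k : (i <= k)%N ->
  pcoef a n i k.+1 = pcoef a n i k * (a k / beta a n k.+1).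
Proof. by move=> h; rewrite /pcoef big_nat_recr. Qed.

Lemma pcoef_recl (R : realFieldType) (a : nat -> R) n i j : (i < j)%N ->
  pcoef a n i j = a i / beta a n i.+1 * pcoef a n i.+1 j.
Proof. by move=> h; rewrite /pcoef big_ltn. Qed.

Definition Tk (R : realFieldType) (a : nat -> R) (n j k : nat) : R :=
  \sum_(1 <= i < (minn j k).+1) (pcoef a n i j * pcoef a n i k / beta a n i).

Lemma sumT_shift (R : realFieldType) (a : nat -> R) n j k r : (r <= k)%N ->
  \sum_(1 <= i < r.+1) (pcoef a n i j * pcoef a n i k.+1 / beta a n i) =
  a k / beta a n k.+1 * \sum_(1 <= i < r.+1) (pcoef a n i j * pcoef a n i k / beta a n i).
Proof.
move=> hr; rewrite mulr_sumr; apply: eq_big_nat => i hi.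
rewrite pcoef_recr; [ring | lia].
Qed.

Lemma T_rec (R : realFieldType) (a : nat -> R) n j k : beta a n k.+1 != 0 -> (1 <= j)%N ->
  beta a n k.+1 * Tk a n j k.+1 = a k * Tk a n j k + (if (k.+1 <= j)%N then pcoef a n k.+1 j else 0).
Proof.
move=> hb hj; rewrite /Tk; case: (leqP j k) => hjk.
  have -> : minn j k.+1 = j by lia.
  try have -> : minn j k = j by lia.
  rewrite sumT_shift // addr0; field; exact: hb.
try have -> : minn j k.+1 = k.+1 by lia.
try have -> : minn j k = k by lia.
rewrite big_nat_recr //= sumT_shift // pcoef_id; field; exact: hb.
Qed.

Lemma sum_split (R : realFieldType) (f : nat -> R) m n k : (m <= k < n)%N ->
  \sum_(m <= j < n) f j = \sum_(m <= j < k) f j + f k + \sum_(k.+1 <= j < n) f j.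
Proof.
move=> h; rewrite (big_cat_nat _ (n:=k)) /=; [|lia|lia].
by rewrite (big_ltn (m:=k)) ?addrA //; lia.
Qed.

Lemma sum_ind (R : realFieldType) (f : nat -> R) m n k : (m <= k < n)%N ->
  \sum_(m <= j < n) (if j == k then f j else 0) = f k.
Proof.
move=> h; rewrite (sum_split _ h) eqxx.
rewrite [X in X + _ + _]big_nat_cond [X in _ + X]big_nat_cond.
rewrite !big1 ?addr0 ?add0r // => j /andP[hj _].
  by have -> : (j == k) = false by lia.
by have -> : (j == k) = false by lia.
Qed.

Lemma sum_ge_term (R : realFieldType) (f : nat -> R) m n k : (m <= k < n)%N ->
  (forall j, (m <= j < n)%N -> 0 <= f j) -> f k <= \sum_(m <= j < n) f j.
Proof.
move=> h hf; rewrite (sum_split _ h).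
have h1 : 0 <= \sum_(m <= j < k) f j.
  by rewrite big_nat_cond; apply: sumr_ge0 => j /andP[hj _]; apply: hf; lia.
have h2 : 0 <= \sum_(k.+1 <= j < n) f j.
  by rewrite big_nat_cond; apply: sumr_ge0 => j /andP[hj _]; apply: hf; lia.
lra.
Qed.

Definition Zf (R : realFieldType) (a : nat -> R) (n : nat) (w : nat -> R) (k : nat) : R :=
  \sum_(1 <= j < n.+1) Tk a n j k * w j.
Definition Yf (R : realFieldType) (a : nat -> R) (n : nat) (w : nat -> R) (k : nat) : R :=
  \sum_(1 <= j < n.+1) (if (k <= j)%N then pcoef a n k j else 0) * w j.

Lemma Z_rec (R : realFieldType) (a : nat -> R) n w k : beta a n k.+1 != 0 ->
  beta a n k.+1 * Zf a n w k.+1 = a k * Zf a n w k + Yf a n w k.+1.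
Proof.
move=> hb; rewrite /Zf /Yf !mulr_sumr -big_split; apply: eq_big_nat => j hj /=.
rewrite mulrA T_rec //; [ring | lia].
Qed.

Lemma Z0 (R : realFieldType) (a : nat -> R) n w : Zf a n w 0 = 0.
Proof. by rewrite /Zf big1 // => j _; rewrite /Tk minn0 big_geq // mul0r. Qed.

Lemma Y_rec (R : realFieldType) (a : nat -> R) n w k : (1 <= k < n)%N ->
  Yf a n w k = w k + a k / beta a n k.+1 * Yf a n w k.+1.
Proof.
move=> hk; rewrite /Yf mulr_sumr.
rewrite -(@sum_ind _ w 1 n.+1 k) ?(ltnW hk) //; last by lia.
rewrite -big_split; apply: eq_big_nat => j hj /=.
case: (ltngtP k j) => h.
- try have -> : (k <= j)%N = true by lia.
  try have -> : (j == k) = false by lia.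
  rewrite pcoef_recl //; ring.
- try have -> : (k <= j)%N = false by lia.
  try have -> : (j == k) = false by lia.
  try have -> : (k < j)%N = false by lia.
  ring.
- subst j; rewrite ?leqnn ?eqxx ?ltnn pcoef_id; ring.
Qed.

Lemma Y_n (R : realFieldType) (a : nat -> R) n w : (0 < n)%N -> Yf a n w n = w n.
Proof.
move=> hn; rewrite /Yf -(@sum_ind _ w 1 n.+1 n); last by lia.
apply: eq_big_nat => j hj.
case: (eqVneq j n) => h.
  by subst j; rewrite leqnn pcoef_id mul1r.
have -> : (n <= j)%N = false by lia.
by rewrite mul0r.
Qed.

Lemma alg1 (R : realFieldType) (ak Zk1 Zk Zkm bk B akm Yk Yk1 wk : R) :
  B != 0 -> B * Zk1 = ak * Zk + Yk1 -> bk * Zk = akm * Zkm + Yk ->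
  Yk = wk + ak / B * Yk1 -> bk = 2 - ak ^+ 2 / B ->
  ak * Zk1 - 2 * Zk + akm * Zkm = - wk.
Proof.
move=> hB h1 h2 h3 h4.
have -> : Zk1 = (ak * Zk + Yk1) / B by rewrite -h1; field.
have -> : akm * Zkm = bk * Zk - Yk by rewrite h2; ring.
rewrite h3 h4; field; exact: hB.
Qed.

Lemma Z_row (R : realFieldType) (a : nat -> R) n w k : (1 <= k < n)%N ->
  (forall k, (1 <= k <= n)%N -> beta a n k != 0) ->
  a k * Zf a n w k.+1 - 2 * Zf a n w k + a k.-1 * Zf a n w k.-1 = - w k.
Proof.
move=> hk hb.
have h2 := Z_rec w (hb k.-1.+1 ltac:(lia)).
have e : k.-1.+1 = k by lia.
rewrite e in h2.
apply: (alg1 (hb k.+1 ltac:(lia)) (Z_rec w (hb k.+1 ltac:(lia))) h2 (Y_rec a w hk)).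
apply: beta_rec; lia.
Qed.

Lemma Z_last (R : realFieldType) (a : nat -> R) n w : (0 < n)%N ->
  (forall k, (1 <= k <= n)%N -> beta a n k != 0) ->
  a n.-1 * Zf a n w n.-1 - Zf a n w n = - w n.
Proof.
move=> hn hb.
have h2 := Z_rec w (hb n.-1.+1 ltac:(lia)).
have e : n.-1.+1 = n by lia.
rewrite e beta_n mul1r Y_n // in h2.
rewrite h2; ring.
Qed.

Lemma alg2 (R : realFieldType) (B dk1 dk ak x : R) : B != 0 -> B * dk1 = ak * dk ->
  ak * dk1 - 2 * dk + x = 0 -> (2 - ak ^+ 2 / B) * dk = x.
Proof.
move=> hB h1.
have -> : dk1 = ak * dk / B by rewrite -h1; field.
move=> h2.
have -> : x = 2 * dk - ak * (ak * dk / B) by lra.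
field; exact: hB.
Qed.

Lemma homog (R : realFieldType) (a b d : nat -> R) n : b n = 1 ->
  (forall k, (1 <= k < n)%N -> b k = 2 - a k ^+ 2 / b k.+1) ->
  (forall k, (1 <= k <= n)%N -> b k != 0) -> d 0%N = 0 ->
  (forall k, (1 <= k)%N -> (k <= n.-1)%N -> a k * d k.+1 - 2 * d k + a k.-1 * d k.-1 = 0) ->
  ((0 < n)%N -> a n.-1 * d n.-1 - d n = 0) ->
  forall k, (k <= n)%N -> d k = 0.
Proof.
move=> hbn hbr hb hd0 hrow hlast.
have Q : forall j, (j < n)%N -> b (n - j)%N * d (n - j)%N = a (n - j).-1 * d (n - j).-1.
  elim=> [|j IH] hj.
    rewrite subn0 hbn mul1r; have := hlast hj; lra.
  have IH' := IH (ltnW hj).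
  have e : (n - j = (n - j.+1).+1)%N by lia.
  rewrite e /= in IH'.
  rewrite hbr; last by lia.
  apply: alg2 IH' _; first by apply: hb; lia.
  apply: hrow; lia.
elim=> [|k IH] hk; first exact: hd0.
have := Q (n - k.+1)%N ltac:(lia).
have e : (n - (n - k.+1) = k.+1)%N by lia.
rewrite e /= IH ?(ltnW hk) // mulr0 => /eqP.
by rewrite mulf_eq0 (negbTE (hb k.+1 ltac:(lia))) /= => /eqP.
Qed.

Lemma dot_sq_le1 (R : realFieldType) d (u v : 'rV[R]_d) :
  dot u u = 1 -> dot v v = 1 -> dot u v ^+ 2 <= 1.
Proof.
move=> hu hv.
have h1 : 2 * dot u v <= dot u u + dot v v.
  rewrite /dot -big_split mulr_sumr /=; apply: ler_sum => i _.
  have := sqr_ge0 (u 0 i - v 0 i); nra.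
have h2 : - (2 * dot u v) <= dot u u + dot v v.
  rewrite /dot -big_split mulr_sumr -sumrN /=; apply: ler_sum => i _.
  have := sqr_ge0 (u 0 i + v 0 i); nra.
rewrite hu hv in h1 h2.
nra.
Qed.
Definition sv (R : realFieldType) (sigma : nat -> R) (k : nat) : R :=
  if k == 0%N then 0 else sigma k.

Lemma tsE (R : realFieldType) (a : nat -> R) n (w sigma : nat -> R) :
  tension_system a n w sigma <->
  ((forall k, (1 <= k)%N -> (k <= n.-1)%N ->
     a k * sv sigma k.+1 - 2 * sv sigma k + a k.-1 * sv sigma k.-1 = - (w k / (n%:R ^+ 2))) /\
  ((0 < n)%N -> a n.-1 * sv sigma n.-1 - sv sigma n = - (w n / (n%:R ^+ 2)))).
Proof. exact: iff_refl. Qed.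

Theorem proposition3p2 (R : realFieldType) (d n : nat) (eta : nat -> 'rV[R]_d)
  (heta : eta n.+1 = 0)
  (hunit : forall k, (1 <= k <= n)%N -> dot (gradp n eta k) (gradp n eta k) = 1) :
  (forall w : nat -> R, (forall j, (1 <= j <= n)%N -> 0 <= w j) ->
     forall sigma : nat -> R,
       tension_system (alpha n eta) n w sigma <->
       (forall k, (1 <= k <= n)%N -> sigma k = sigmaF (alpha n eta) n w k))
  /\
  ((forall w : nat -> R, (forall j, (1 <= j <= n)%N -> 0 <= w j) ->
      (exists j, (1 <= j <= n)%N /\ w j <> 0) ->
      forall k, (1 <= k <= n)%N -> 0 < sigmaF (alpha n eta) n w k)
   <-> (forall i, (1 <= i <= n.-1)%N -> 0 < alpha n eta i)).
Proof.
have [hn0|hn] := posnP n.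
  subst n; split.
    move=> w _ sigma; split; first by move=> _ k hk; exfalso; lia.
    by move=> _; rewrite /tension_system; split => [k h1 h2|h]; exfalso; lia.
  split; first by move=> _ i hi; exfalso; lia.
  by move=> _ w _ [j [hj _]]; exfalso; lia.
set a := alpha n eta.
have ha2 : forall k, (1 <= k < n)%N -> a k ^+ 2 <= 1.
  by move=> k hk; apply: dot_sq_le1; apply: hunit; lia.
have hb1 := beta_ge1 ha2.
have hbpos : forall k, (1 <= k <= n)%N -> 0 < beta a n k.
  by move=> k hk; apply: lt_le_trans (hb1 k hk); rewrite ltr01.
have hb0 : forall k, (1 <= k <= n)%N -> beta a n k != 0.
  by move=> k hk; rewrite gt_eqF // hbpos.
have hnR : (n%:R : R) != 0 by rewrite pnatr_eq0 -lt0n.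
set N := (n%:R : R) ^+ 2.
have hN : N != 0 by rewrite /N expf_neq0.
have sigE : forall w k, sigmaF a n w k = Zf a n w k / N.
  move=> w k; rewrite /sigmaF /Zf /Gker /N.
  under eq_bigr => j _ do rewrite -mulrA.
  rewrite -mulr_sumr /Tk; field; exact: hnR.
split.
- move=> w _ sigma.
  set t := fun k => Zf a n w k / N.
  have E1 : forall k, (1 <= k)%N -> (k <= n.-1)%N ->
      a k * t k.+1 - 2 * t k + a k.-1 * t k.-1 = - (w k / N).
    move=> k h1 h2; rewrite /t.
    have h := @Z_row R a n w k ltac:(lia) hb0.
    have -> : w k = - (a k * Zf a n w k.+1 - 2 * Zf a n w k + a k.-1 * Zf a n w k.-1)
      by rewrite h opprK.
    field; exact: hN.
  have E2 : a n.-1 * t n.-1 - t n = - (w n / N).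
    have h := @Z_last R a n w hn hb0.
    rewrite /t.
    have -> : w n = - (a n.-1 * Zf a n w n.-1 - Zf a n w n) by rewrite h opprK.
    field; exact: hN.
  have t0 : t 0%N = 0 by rewrite /t Z0 mul0r.
  rewrite tsE; split.
  + move=> [H1 H2] k hk.
    have hd : forall k, (k <= n)%N -> sv sigma k - t k = 0.
      apply: (homog (a:=a) (b:=beta a n) (beta_n a n) _ hb0).
      * by move=> k' hk'; apply: beta_rec; lia.
      * by rewrite /sv eqxx t0 subr0.
      * move=> k' h1 h2; have := H1 k' h1 h2; have := E1 k' h1 h2; rewrite -/N; lra.
      * move=> _; have := H2 hn; rewrite -/N; lra.
    have := hd k ltac:(lia); rewrite /sv sigE.
    have -> : (k == 0%N) = false by lia.
    rewrite /t; lra.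
  + move=> H.
    have hs : forall k, (k <= n)%N -> sv sigma k = t k.
      move=> k hk; rewrite /sv; case: eqP => [->|hk0]; first by rewrite t0.
      rewrite H ?sigE //; lia.
    split.
    * move=> k h1 h2; rewrite !hs; try lia; exact: E1.
    * move=> _; rewrite !hs; try lia; exact: E2.
- split.
  + move=> Hpos i hi.
    rewrite ltNge; apply/negP => hai.
    pose w := fun j : nat => if j == i.+1 then (1 : R) else 0.
    have hw : forall j, (1 <= j <= n)%N -> 0 <= w j.
      by move=> j _; rewrite /w; case: ifP => _; [exact: ler01 | exact: lexx].
    have hex : exists j, (1 <= j <= n)%N /\ w j <> 0.
      exists i.+1; split; first by lia.
      by rewrite /w eqxx; apply/eqP; exact: oner_neq0.
    have := Hpos w hw hex i ltac:(lia).
    rewrite ltNge => /negP; apply.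
    rewrite /sigmaF; apply: mulr_ge0_le0; first by rewrite invr_ge0 ler0n.
    rewrite big_nat_cond -oppr_ge0 -sumrN; apply: sumr_ge0 => j /andP[hj _].
    rewrite oppr_ge0 /w; case: eqP => [->|_]; last by rewrite mulr0.
    rewrite mulr1 /Gker; apply: mulr_ge0_le0; first by rewrite invr_ge0 ler0n.
    have -> : minn i.+1 i = i by lia.
    rewrite big_nat_cond -oppr_ge0 -sumrN; apply: sumr_ge0 => l /andP[hl _].
    rewrite oppr_ge0 pcoef_recr; last by lia.
    have -> : pcoef a n l i * (a i / beta a n i.+1) * pcoef a n l i / beta a n l =
      (pcoef a n l i ^+ 2) * (a i * ((beta a n i.+1)^-1 * (beta a n l)^-1)) by ring.
    apply: mulr_ge0_le0; first exact: sqr_ge0.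
    apply: mulr_le0_ge0 => //; apply: mulr_ge0; rewrite invr_ge0; apply: ltW;
      apply: hbpos; lia.
  + move=> Hal w hw [j0 [hj0 hwj0]] k hk.
    rewrite /sigmaF; apply: mulr_gt0; first by rewrite invr_gt0 ltr0n.
    have hp : forall i j, (1 <= i)%N -> (j <= n)%N -> 0 < pcoef a n i j.
      move=> i' j' hi' hj'; rewrite /pcoef big_nat_cond; apply: prodr_gt0 => m /andP[hm _].
      apply: divr_gt0; [apply: Hal | apply: hbpos]; lia.
    have hG : forall j, (1 <= j <= n)%N -> 0 < Gker a n k j.
      move=> j hj; rewrite /Gker; apply: mulr_gt0; first by rewrite invr_gt0 ltr0n.
      apply: (@lt_le_trans _ _ (pcoef a n 1 j * pcoef a n 1 k / beta a n 1)).
        apply: divr_gt0; [apply: mulr_gt0; apply: hp|apply: hbpos]; lia.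
      apply: (@sum_ge_term R (fun i => pcoef a n i j * pcoef a n i k / beta a n i) 1 (minn j k).+1 1); first by lia.
      move=> i hi; apply: ltW; apply: divr_gt0; [apply: mulr_gt0; apply: hp|apply: hbpos]; lia.
    apply: (@lt_le_trans _ _ (Gker a n k j0 * w j0)).
      apply: mulr_gt0; first by apply: hG; lia.
      rewrite lt_def; apply/andP; split; [apply/eqP; exact: hwj0 | apply: hw; lia].
    apply: (@sum_ge_term R (fun j => Gker a n k j * w j) 1 n.+1 j0); first by lia.
    move=> j hj; apply: mulr_ge0; [apply: ltW; apply: hG; lia | apply: hw; lia].
Qed.
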